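(* Let $A\in\mathbb{R}^{s\times s}$ and $b\in\mathbb{R}^s$ be the coefficients of an $s$-stage Runge–Kutta scheme with $c=Ae$, $e=(1,\dots,1)^T$, and let $\tilde q\ge 1$ be an integer. For $j\ge1$ define $g^{(j)}(\zeta)=\zeta\, b^T (I-\zeta A)^{-1}\tau^{(j)}$. Then $g^{(j)}(\zeta)=0$ for all $\zeta>0$ for which $I-\zeta A$ is invertible and all $1\le j\le \tilde q$, if and only if the scheme has weak stage order $\tilde q$.
   Context: Powers of vectors are componentwise. The stage order vectors are $\tau^{(j)} = A c^{j-1} - \tfrac{1}{j}c^{j}$, $j=1,2,\dots$. The scheme is said to have weak stage order $\tilde q$ if there exists a subspace $V\subseteq\mathbb{R}^s$ with $AV\subseteq V$, $b^T v=0$ for all $v\in V$, and $\tau^{(j)}\in V$ for all $1\le j\le\tilde q$. *)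

(* Defs.v *)
From HB Require Import structures.
From mathcomp Require Import all_boot all_order all_algebra.
Set Implicit Arguments. Unset Strict Implicit. Unset Printing Implicit Defensive.
Import Order.TTheory GRing.Theory Num.Theory.
Local Open Scope ring_scope.

Section RK.
Variables (R : realFieldType) (s : nat).

Definition ones : 'cV[R]_s := const_mx 1.

Definition abscissae (A : 'M[R]_s) : 'cV[R]_s := A *m ones.

Definition cpow (v : 'cV[R]_s) (k : nat) : 'cV[R]_s := map_mx (fun x => x ^+ k) v.

Definition tau (A : 'M[R]_s) (j : nat) : 'cV[R]_s :=
  A *m cpow (abscissae A) j.-1 - (j%:R)^-1 *: cpow (abscissae A) j.

Definition gfun (A : 'M[R]_s) (b : 'cV[R]_s) (j : nat) (zeta : R) : R :=
  zeta * (b^T *m invmx (1%:M - zeta *: A) *m tau A j) 0 0.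

Definition weak_stage_order (A : 'M[R]_s) (b : 'cV[R]_s) (q : nat) : Prop :=
  exists V : {vspace 'cV[R]_s},
    (forall v, v \in V -> A *m v \in V) /\
    (forall v, v \in V -> b^T *m v = 0) /\
    (forall j, (1 <= j <= q)%N -> tau A j \in V).

End RK.

(* Main.v *)
Require Import Defs.
From HB Require Import structures.
From mathcomp Require Import all_boot all_order all_algebra.
From mathcomp Require Import ring zify.
Import Order.TTheory GRing.Theory Num.Theory.
Local Open Scope ring_scope.

Section Fwd.
Variables (R : realFieldType) (n : nat) (A : 'M[R]_n.+1).

Definition ca (i : nat) : R := (char_poly A)`_i.

Lemma CH_sum : \sum_(i < n.+2) ca i *: A ^+ i = 0.
Proof.
have := Cayley_Hamilton A.
rewrite -{1}(coefK (char_poly A)) poly_def size_char_poly rmorph_sum /=.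
move=> H; rewrite -[RHS]H; apply: eq_bigr => i _.
by rewrite linearZ /= rmorphXn /= horner_mx_X.
Qed.

Lemma ca_last : ca n.+1 = 1.
Proof.
have /monicP := char_poly_monic A.
by rewrite /lead_coef size_char_poly.
Qed.

Lemma geom (z : R) k :
  (\sum_(m < k) z ^+ m *: A ^+ m) *m (1%:M - z *: A) = 1%:M - z ^+ k *: A ^+ k.
Proof.
elim: k => [|k IH]; first by rewrite big_ord0 mul0mx expr0 scale1r expr0 subrr.
rewrite big_ord_recr /= mulmxDl IH mulmxBr mulmx1 -scalemxAl -scalemxAr scalerA.
by rewrite mulmxE -exprSr -exprSr addrA subrK.
Qed.

Definition Qm (z : R) : 'M[R]_n.+1 :=
  \sum_(i < n.+2) (ca i * z ^+ (n.+1 - i)) *: \sum_(m < i) z ^+ m *: A ^+ m.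
Definition rp : {poly R} := \sum_(i < n.+2) ca i *: 'X^(n.+1 - i).

Lemma rp_eval z : rp.[z] = \sum_(i < n.+2) ca i * z ^+ (n.+1 - i).
Proof. by rewrite /rp horner_sum; apply: eq_bigr => i _; rewrite hornerZ hornerXn. Qed.

Lemma QM z : Qm z *m (1%:M - z *: A) = rp.[z] *: 1%:M.
Proof.
rewrite /Qm mulmx_suml.
under eq_bigr => i _ do rewrite -scalemxAl geom scalerBr.
rewrite sumrB.
have -> : \sum_(i < n.+2) (ca i * z ^+ (n.+1 - i)) *: (z ^+ i *: A ^+ i) = 0.
  transitivity (z ^+ n.+1 *: \sum_(i < n.+2) ca i *: A ^+ i); last first.
    by rewrite CH_sum scaler0.
  rewrite scaler_sumr; apply: eq_bigr => i _; rewrite [LHS]scalerA [RHS]scalerA; congr (_ *: _).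
  by rewrite -mulrA -exprD subnK; [exact: mulrC | rewrite -ltnS ltn_ord].
by rewrite subr0 rp_eval scaler_suml.
Qed.

Lemma Qinv z : (1%:M - z *: A) \in unitmx -> Qm z = rp.[z] *: invmx (1%:M - z *: A).
Proof.
move=> U; rewrite -[Qm z](mulmxK U) QM -scalemxAl mul1mx //.
Qed.

Lemma rp_unit z : rp.[z] != 0 -> (1%:M - z *: A) \in unitmx.
Proof.
move=> nz; have [] := @mulmx1_unit _ _ (rp.[z]^-1 *: Qm z) (1%:M - z *: A) => //.
by rewrite -scalemxAl QM scalerA mulVf // scale1r.
Qed.

Lemma rp_neq0 : rp != 0.
Proof.
apply/eqP => /(congr1 (fun p : {poly R} => p`_0)); rewrite coef0 /rp coef_sum.
rewrite big_ord_recr /= big1 ?add0r.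
  by rewrite coefZ coefXn subnn eqxx mulr1 ca_last; apply/eqP; rewrite oner_eq0.
move=> i _; rewrite coefZ coefXn.
have : (0 < n.+1 - i)%N by rewrite subn_gt0 ltn_ord.
by case: (n.+1 - i)%N => // ? _; rewrite mulr0.
Qed.

Section Vec.
Variables (b t : 'cV[R]_n.+1).
Definition phi (X : 'M[R]_n.+1) : R := (b^T *m X *m t) 0 0.
Definition hh m := phi (A ^+ m).

Lemma phiZ c X : phi (c *: X) = c * phi X.
Proof. by rewrite /phi -scalemxAr -scalemxAl mxE. Qed.

Lemma phi_sum k (F : 'I_k -> 'M[R]_n.+1) : phi (\sum_(i < k) F i) = \sum_(i < k) phi (F i).
Proof. by rewrite /phi mulmx_sumr mulmx_suml summxE. Qed.

Definition pp : {poly R} :=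
  \sum_(i < n.+2) \sum_(m < i) (ca i * hh m) *: 'X^(n.+1 - i + m).

Lemma pp_eval z : pp.[z] = phi (Qm z).
Proof.
rewrite /pp /Qm horner_sum phi_sum; apply: eq_bigr => i _.
rewrite horner_sum phiZ phi_sum mulr_sumr; apply: eq_bigr => m _.
rewrite hornerZ hornerXn phiZ exprD /hh -!mulrA; congr (_ * _); rewrite mulrCA; congr (_ * _); exact: mulrC.

Qed.
Lemma pp_coef k : pp`_k =
  \sum_(i < n.+2) \sum_(m < i) ca i * hh m * (k == (n.+1 - i + m)%N)%:R.
Proof.
rewrite /pp coef_sum; apply: eq_bigr => i _; rewrite coef_sum; apply: eq_bigr => m _.
by rewrite coefZ coefXn.
Qed.

Lemma fwd : (forall z, 0 < z -> (1%:M - z *: A) \in unitmx -> phi (invmx (1%:M - z *: A)) = 0) ->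
  forall m, (m < n.+1)%N -> b^T *m A ^+ m *m t = 0.
Proof.
move=> H.
have Hroot : forall z, 0 < z -> (pp * rp).[z] = 0.
  move=> z z0; rewrite hornerM.
  case U: ((1%:M - z *: A) \in unitmx).
    by rewrite pp_eval Qinv // phiZ H // mulr0 mul0r.
  suff -> : rp.[z] = 0 by rewrite mulr0.
  by apply/eqP; apply: contraFT U => /rp_unit ->.
have pr0 : pp * rp = 0.
  apply/eqP; apply: contraT => nz.
  have := max_poly_roots nz (rs := [seq i.+1%:R | i <- iota 0 (size (pp*rp))]).
  rewrite size_map size_iota ltnn; apply.
    by apply/allP => x /mapP [i _ ->]; apply/rootP; apply: Hroot; rewrite ltr0Sn.
  by rewrite map_inj_uniq ?iota_uniq // => x y /eqP; rewrite eqr_nat => /eqP [].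
have pp0 : pp = 0.
  by move: pr0 => /eqP; rewrite mulf_eq0 (negbTE rp_neq0) orbF => /eqP.
suff hh0 : forall k m, (m < k)%N -> (m < n.+1)%N -> hh m = 0.
  move=> m mn; apply/matrixP => i j; rewrite !ord1 [RHS]mxE.
  exact: (hh0 m.+1 m).
elim=> [//|k IH] m; rewrite ltnS leq_eqVlt => /orP [/eqP -> km|mk mn]; last exact: IH.
have := pp_coef k; rewrite pp0 coef0 big_ord_recr /= big1 ?add0r.
  rewrite (bigD1 (Ordinal km)) //= big1 ?addr0.
    by rewrite subnn add0n eqxx ca_last mul1r mulr1 => ->.
  move=> j /eqP nej; rewrite subnn add0n.
  case: eqP => [E|]; last by rewrite mulr0.
  by exfalso; apply: nej; apply: val_inj; rewrite /= E.
move=> i _; apply: big1 => j _.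
case: (ltnP j k) => jk.
  rewrite (IH j) ?mulr0 ?mul0r //.
  exact: (ltn_trans (ltn_ord j) (ltn_ord i)).
case: eqP => [E|]; last by rewrite mulr0.
exfalso; move: E jk; rewrite /= => ->.
have : (0 < n.+1 - i)%N by rewrite subn_gt0 ltn_ord.
by case: (n.+1 - i)%N => // d _; rewrite addSn ltnNge leq_addl.
Qed.
End Vec.
End Fwd.

Section Bwd.
Variables (R : realFieldType) (s : nat) (A : 'M[R]_s) (b : 'cV[R]_s) (V : {vspace 'cV[R]_s}).

Lemma bwd (t : 'cV[R]_s) z : (forall v, v \in V -> A *m v \in V) ->
  (forall v, v \in V -> b^T *m v = 0) -> t \in V -> (1%:M - z *: A) \in unitmx ->
  b^T *m invmx (1%:M - z *: A) *m t = 0.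
Proof.
move=> AV bV tV U.
pose f : 'End('cV[R]_s) := linfun (mulmx (1%:M - z *: A)).
have fV : (f @: V <= V)%VS.
  apply/subvP => w /memv_imgP [u uV ->]; rewrite lfunE /= mulmxBl mul1mx -scalemxAl.
  by rewrite rpredB // rpredZ // AV.
have ker : lker f == 0%VS.
  by apply/lker0P => u v; rewrite !lfunE /=; apply: (can_inj (mulKmx U)).
have dimeq : \dim (f @: V) = \dim V by rewrite limg_dim_eq // (eqP ker) capv0.
have eqV : (f @: V)%VS = V by apply/eqP; rewrite eqEdim fV dimeq leqnn.
move: tV; rewrite -eqV => /memv_imgP [u uV ->].
by rewrite lfunE /= -mulmxA mulKmx // bV.
Qed.
End Bwd.

Lemma CH_top (R : realFieldType) (n : nat) (A : 'M[R]_n.+1) :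
  A ^+ n.+1 = - \sum_(i < n.+1) @ca _ _ A i *: A ^+ i.
Proof.
apply/eqP; rewrite -addr_eq0 addrC.
by have := @CH_sum _ _ A; rewrite big_ord_recr /= ca_last scale1r => ->.
Qed.

Theorem theorem2 (R : realFieldType) (s : nat) (A : 'M[R]_s) (b : 'cV[R]_s)
  (q : nat) (hq : (1 <= q)%N) :
  (forall zeta : R, 0 < zeta -> (1%:M - zeta *: A) \in unitmx ->
     forall j : nat, (1 <= j <= q)%N -> gfun A b j zeta = 0)
  <-> weak_stage_order A b q.
Proof.
split; last first.
  move=> [V [AV [bV tV]]] z z0 U j hj.
  by rewrite /gfun (@bwd _ _ A b V _ z AV bV (tV j hj) U) mxE mulr0.
case: s A b => [|n] A b H.
  exists fullv; split; first by move=> v _; rewrite memvf.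
  split; last by move=> j _; rewrite memvf.
  by move=> v _; apply/matrixP => i j; rewrite !mxE big_ord0.
pose X := [seq A ^+ m *m tau A j | m <- iota 0 n.+1, j <- iota 1 q].
have memX : forall m j, (m < n.+1)%N -> (1 <= j <= q)%N -> A ^+ m *m tau A j \in <<X>>%VS.
  move=> m j hm hj; apply: memv_span.
  apply: (allpairs_f (fun m j => A ^+ m *m tau A j)); rewrite mem_iota.
    by apply/andP; split; lia.
  by case/andP: hj => ? ?; apply/andP; split; lia.
have hX0 : forall x, x \in X -> b^T *m x = 0.
  move=> x /allpairsP [[m j] [mi ji ->]].
  move: mi ji; rewrite !mem_iota => /andP[_ mi] /andP[j1 j2].
  have hj : (1 <= j <= q)%N by apply/andP; split; simpl in *; lia.
  have {}mi : (m < n.+1)%N by simpl in *; lia.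
  rewrite mulmxA; apply: (@fwd _ _ A b (tau A j) _ m mi) => z z0 U.
  have := H z z0 U j hj; rewrite /gfun => /eqP; rewrite mulf_eq0 gt_eqF //= => /eqP.
  done.
have hAX : forall x, x \in X -> A *m x \in <<X>>%VS.
  move=> x /allpairsP [[m j] [mi ji ->]].
  move: (mi); rewrite mem_iota => /andP[_ mn]; simpl in *.
  have {}mn : (m < n.+1)%N by lia.
  have -> : A *m (A ^+ m *m tau A j) = A ^+ m.+1 *m tau A j by rewrite mulmxA exprS mulmxE.
  have [mn'|] := ltnP m.+1 n.+1.
    apply: memX => //; rewrite mem_iota in ji; case/andP: ji => ? ?; apply/andP; split; lia.
  rewrite ltnS => nm; have -> : m = n by apply/eqP; rewrite eqn_leq nm -ltnS mn.
  rewrite CH_top mulNmx mulmx_suml rpredN rpred_sum // => i _.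
  rewrite -scalemxAl rpredZ // memX //.
  rewrite mem_iota in ji; case/andP: ji => ? ?; apply/andP; split; lia.
exists <<X>>%VS; split; last split.
- move=> v vX.
  pose h : 'End('cV[R]_n.+1) := linfun (mulmx A).
  have hS : (h @: <<X>> <= <<X>>)%VS.
    by rewrite limg_span; apply/span_subvP => y /mapP [x xX ->]; rewrite lfunE hAX.
  have := memv_img h vX; rewrite lfunE /= => hv.
  exact: (subvP hS).
- move=> v vX.
  pose g : 'Hom('cV[R]_n.+1, 'M[R]_1) := linfun (mulmx b^T).
  have gS : (<<X>> <= lker g)%VS.
    by apply/span_subvP => x xX; rewrite memv_ker lfunE /= hX0.
  by have := subvP gS v vX; rewrite memv_ker lfunE /= => /eqP.
- move=> j hj; have := memX 0%N j (ltn0Sn n) hj.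
  by rewrite expr0 mul1mx.
Qed.
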